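(* Let $T_3$ be the tree with vertices $w,x,y,z,u_1,a_1,b_1,u_2,a_2,b_2$ and edges $wx,xy,yz,zu_1,u_1a_1,u_1b_1,zu_2,u_2a_2,u_2b_2$. Let $v$ be a vertex of $T_3$, $S$ a $\Delta_S$-star with $\Delta_S\ge 3$, and $G=T_3\rhd_v S$ a graph of order $n$ and maximum degree $\Delta\ge 3$. Then $\gamma^{\rm ID}(G)\le \left(\frac{\Delta-1}{\Delta}\right)n$.
   Context: An identifying code of a graph $G$ is a set $C\subseteq V(G)$ such that every vertex $v$ has $N[v]\cap C\neq\emptyset$ and for all distinct $u,v$, $N[u]\cap C \ne N[v]\cap C$, where $N[v]$ is the closed neighborhood; $\gamma^{\rm ID}(G)$ is its minimum size. A $k$-star is $K_{1,k}$. For a graph $G'$, a vertex $v$ of $G'$ and a star $S$, $G'\rhd_v S$ is the graph obtained from the disjoint union of $G'$ and $S$ by identifying $v$ with a leaf of $S$. *)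

(* Defs.v *)
(* Finite simple graphs as symmetric irreflexive relations on a finType. *)
From mathcomp Require Import all_boot.
Set Implicit Arguments. Unset Strict Implicit. Unset Printing Implicit Defensive.

Section Graphs.
Variable V : finType.
Variable e : rel V.

Definition cnbhd (v : V) : {set V} := [set y | (y == v) || e v y].

Definition deg (v : V) : nat := #|[set y | e v y]|.
Definition maxdeg : nat := \max_(x : V) deg x.

Definition is_id_codeb (C : {set V}) : bool :=
  [forall v, cnbhd v :&: C != set0] &&
  [forall u, forall v, (u != v) ==> (cnbhd u :&: C != cnbhd v :&: C)].

(* gamma^ID : minimum size of an identifying code (default #|V|.+1 if none exists) *)
Definition gammaID : nat :=
  \big[minn/#|V|.+1]_(C : {set V} | is_id_codeb C) #|C|.
End Graphs.

Definition gorder (V : finType) (e : rel V) : nat := #|V|.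
Arguments gorder [V] e.

(* G' |>_v S for the star S = K_{1,k} (k >= 1): vertices are those of G' (inl),
   the centre of S (inr None) and the k-1 leaves of S other than the one
   identified with v (inr (Some j)). *)
Definition attach_star (V : finType) (e : rel V) (v : V) (k : nat)
  : rel (V + option 'I_k.-1)%type :=
  fun x y =>
    match x, y with
    | inl a, inl b => e a b
    | inl a, inr None => a == v
    | inr None, inl a => a == v
    | inr None, inr (Some _) => true
    | inr (Some _), inr None => true
    | _, _ => false
    end.

(* The tree T_3 on 'I_10 with labelling
   w=0, x=1, y=2, z=3, u1=4, a1=5, b1=6, u2=7, a2=8, b2=9. *)
Definition T3_edges : seq (nat * nat) :=
  [:: (0,1); (1,2); (2,3); (3,4); (4,5); (4,6); (3,7); (7,8); (7,9)].

Definition T3 : rel 'I_10 :=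
  fun a b => ((nat_of_ord a, nat_of_ord b) \in T3_edges) ||
             ((nat_of_ord b, nat_of_ord a) \in T3_edges).

Arguments attach_star [V] e v k .

(* Main.v *)
Require Import Defs.
From mathcomp Require Import all_boot.
From mathcomp Require Import zify.

Definition adjN (a w : nat) : bool :=
  (w == a) || ((a, w) \in T3_edges) || ((w, a) \in T3_edges).
Definition adjT (a w : 'I_10) : bool := (w == a) || T3 a w.
Lemma adjTN a w : adjT a w = adjN a w.
Proof. by rewrite /adjT /adjN /T3 orbA. Qed.

Definition Alist (v : nat) : seq nat :=
  match v with
  | 0 => [:: 0;3;4;5;7;8]
  | 1 => [:: 1;2;5;6;8;9]
  | 2 => [:: 0;2;5;6;8;9]
  | 3 => [:: 0;2;3;4;5;7;8]
  | 4 => [:: 0;2;4;5;8;9]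
  | 5 => [:: 0;2;4;5;8;9]
  | 6 => [:: 0;2;4;6;8;9]
  | 7 => [:: 0;2;5;6;7;8]
  | 8 => [:: 0;2;5;6;7;8]
  | _ => [:: 0;2;5;6;7;9]
  end.

Definition checkN (v : nat) : bool :=
  let A := Alist v in let I := iota 0 10 in
  [&& v \in A,
   all (fun a => has (fun w => (w \in A) && adjN a w) I) I,
   all (fun a => all (fun b => (a != b) ==>
       (has (fun w => (w \in A) && (adjN a w != adjN b w)) I || ((a == v) != (b == v)))) I) I,
   (if v == 3 then 3 else 4) <= count (fun x => x \notin A) I &
   (v == 3) ==> (3 <= count (fun x => adjN v x && (x != v)) I)].

Lemma checkN_all : all checkN (iota 0 10).
Proof. by vm_compute. Qed.

Lemma card_nat n (P : pred nat) : #|[set x : 'I_n | P x]| = count P (iota 0 n).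
Proof.
by rewrite cardsE cardE /enum_mem size_filter -enumT -val_enum_ord count_map.
Qed.

Lemma inI (a : 'I_10) : nat_of_ord a \in iota 0 10.
Proof. by rewrite mem_iota /= ltn_ord. Qed.

Definition Aset (v : 'I_10) : {set 'I_10} := [set x : 'I_10 | nat_of_ord x \in Alist v].

Lemma has_ord (P : pred nat) : has P (iota 0 10) -> exists w : 'I_10, P w.
Proof. by case/hasP => w; rewrite mem_iota /= => hw Pw; exists (Ordinal hw). Qed.

Lemma Aset_props (v : 'I_10) :
  [/\ v \in Aset v,
   (forall a, exists2 w, w \in Aset v & adjT a w),
   (forall a b, a != b -> (exists2 w, w \in Aset v & adjT a w != adjT b w) \/ ((a == v) != (b == v))),
   (if nat_of_ord v == 3 then 3 else 4) <= #|~: Aset v| &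
   nat_of_ord v = 3 -> 3 <= #|[set x | adjT v x && (x != v)]| ].
Proof.
have := checkN_all; move/allP/(_ (nat_of_ord v)); rewrite mem_iota /= ltn_ord => /(_ isT).
case/and5P => h1 /allP h2 /allP h3 h4 h5; split.
- by rewrite inE.
- move=> a; have /has_ord [w /andP [w1 w2]] := h2 a (inI _).
  by exists w; rewrite ?inE ?adjTN.
- move=> a b ab; have := h3 a (inI _).
  move/allP/(_ b (inI _)); rewrite ab implyTb.
  case/orP => [/has_ord [w /andP [w1 w2]]|H]; [left|right => //].
  by exists w; rewrite ?inE ?adjTN.
- apply: leq_trans h4 _; rewrite -card_nat; apply: subset_leq_card.
  by apply/subsetP => x; rewrite !inE.
- move=> v3; move/implyP: h5 => /(_ (introT eqP v3)) h5.
  apply: leq_trans h5 _; rewrite -card_nat; apply: subset_leq_card.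
  by apply/subsetP => x; rewrite !inE adjTN.
Qed.
Definition Cset {k : nat} (A : {set 'I_10}) (j0 : 'I_k.-1) : {set ('I_10 + option 'I_k.-1)} :=
  [set x | match x with inl a => a \in A | inr None => true | inr (Some j) => j != j0 end].

Lemma wit (T : finType) (X Y : {set T}) z : (z \in X) != (z \in Y) -> X != Y.
Proof. by apply: contra => /eqP ->; rewrite eqxx. Qed.

Lemma inrS_eq m (i j : 'I_m) : (inr (Some i) == inr (Some j) :> ('I_10 + option 'I_m)) = (i == j).
Proof. by apply/eqP/eqP => [[]|->]. Qed.

Lemma key (v : 'I_10) (A : {set 'I_10}) (k : nat) (h0 : 0 < k.-1) (h1 : 1 < k.-1) :
  v \in A ->
  (forall a, exists2 w, w \in A & adjT a w) ->
  (forall a b, a != b -> (exists2 w, w \in A & adjT a w != adjT b w) \/ ((a == v) != (b == v))) ->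
  is_id_codeb (attach_star T3 v k) (Cset A (Ordinal h0)).
Proof.
move=> vA dom sep; set j0 := Ordinal h0; set j1 : 'I_k.-1 := Ordinal h1.
have j10 : j1 != j0 by [].
apply/andP; split.
  apply/forallP => [[a|[j|]]]; apply/set0Pn.
  - have [w wA aw] := dom a; exists (inl w); rewrite !inE /=.
    by move: aw; rewrite /adjT => ->.
  - by exists (inr None); rewrite !inE /=.
  - by exists (inr None); rewrite !inE /=.
have gen : forall x y : 'I_10 + option 'I_k.-1, x != y ->
   (match x with inl _ => true | _ => false end) || (match y with inl _ => false | _ => true end) ->
   cnbhd (attach_star T3 v k) x :&: Cset A j0 != cnbhd (attach_star T3 v k) y :&: Cset A j0.
  move=> [a|[i|]] [b|[j|]] //= xy _.
  - have ab : a != b by apply: contra xy => /eqP ->.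
    case: (sep a b ab) => [[w wA]|H].
      move=> aw; apply: (@wit _ _ _ (inl w)); rewrite !inE /= wA !andbT.
      by move: aw; rewrite /adjT.
    by apply: (@wit _ _ _ (inr None)); rewrite !inE /= !andbT.
  - case: (boolP (j == j0)) => [/eqP ->|jj0].
      have [w wA aw] := dom a; apply: (@wit _ _ _ (inl w)); rewrite !inE /= wA andbT.
      by move: aw; rewrite /adjT => ->.
    by apply: (@wit _ _ _ (inr (Some j))); rewrite !inE /= eqxx jj0.
  - by apply: (@wit _ _ _ (inr (Some j1))); rewrite !inE /=.
  - have ij : i != j by apply: contra xy => /eqP ->.
    case: (boolP (i == j0)) => [/eqP ii0|ii0].
      have jj0 : j != j0 by rewrite -ii0 eq_sym.
      by apply: (@wit _ _ _ (inr (Some j))); rewrite !inE /= eqxx jj0 /= andbT inrS_eq (eq_sym j i) (negbTE ij).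
    by apply: (@wit _ _ _ (inr (Some i))); rewrite !inE /= eqxx ii0 /= andbT inrS_eq (negbTE ij).
  - by apply: (@wit _ _ _ (inl v)); rewrite !inE /= eqxx vA.
  - by apply: (@wit _ _ _ (inl v)); rewrite !inE /= eqxx vA.
apply/forallP => x; apply/forallP => y; apply/implyP => xy.
case: x xy => [a|[i|]]; case: y => [b|[j|]] xy;
  first [by apply: gen | by rewrite eq_sym; apply: gen; rewrite // eq_sym].
Qed.

Lemma bigmin_le (I : eqType) (r : seq I) (P : pred I) (F : I -> nat) x0 i :
  i \in r -> P i -> \big[minn/x0]_(j <- r | P j) F j <= F i.
Proof.
elim: r => // a r IH; rewrite inE big_cons => /orP [/eqP <- Pi | ir Pi].
  by rewrite Pi geq_minl.
case: (P a); last exact: IH.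
by apply: leq_trans (geq_minr _ _) (IH ir Pi).
Qed.

Lemma gamma_le (V : finType) (e : rel V) (C : {set V}) :
  is_id_codeb e C -> gammaID e <= #|C|.
Proof. by move=> h; rewrite /gammaID; apply: bigmin_le; rewrite ?mem_index_enum. Qed.

Lemma card_C (k : nat) (A : {set 'I_10}) (j0 : 'I_k.-1) :
  #|Cset A j0| + (#|~: A| + 1) <= #|{: 'I_10 + option 'I_k.-1}|.
Proof.
rewrite -(cardsC (Cset A j0)) leq_add2l.
have -> : #|~: A| + 1 = #|inr (Some j0) |: [set inl x | x in ~: A]|.
  rewrite cardsU1 card_imset; last exact: inl_inj.
  suff -> : inr (Some j0) \notin [set inl x | x in ~: A] by rewrite addnC.
  by apply/negP => /imsetP [x _].
apply: subset_leq_card; apply/subsetP => y; rewrite !inE.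
case/orP => [/eqP -> | /imsetP [x xA ->]]; first by rewrite eqxx.
by rewrite !inE in xA *.
Qed.

Lemma cardV (k : nat) : 0 < k -> #|{: 'I_10 + option 'I_k.-1}| = 10 + k.
Proof. by move=> hk; rewrite card_sum card_option !card_ord prednK. Qed.

Lemma deg_center (v : 'I_10) (k : nat) : 0 < k ->
  k <= maxdeg (attach_star T3 v k).
Proof.
move=> hk; apply: (leq_trans _ (leq_bigmax (F := deg (attach_star T3 v k)) (inr None))).
rewrite /deg.
apply: (@leq_trans #|inl v |: [set inr (Some j) | j : 'I_k.-1]|).
  rewrite cardsU1 card_imset; last by move=> i j [].
  rewrite card_ord; case: k hk => // k _ /=.
  suff -> : inl v \notin [set inr (Some j) | j : 'I_k] by rewrite add1n.
  by apply/negP => /imsetP [x _].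
apply: subset_leq_card; apply/subsetP => y; rewrite !inE.
by case/orP => [/eqP -> | /imsetP [x _ ->]] /=.
Qed.

Lemma deg_v3 (v : 'I_10) (k : nat) :
  3 <= #|[set x | adjT v x && (x != v)]| -> 4 <= maxdeg (attach_star T3 v k).
Proof.
move=> h3; apply: (leq_trans _ (leq_bigmax (F := deg (attach_star T3 v k)) (inl v))).
rewrite /deg.
apply: (@leq_trans #|(inr None : 'I_10 + option 'I_k.-1) |: [set inl x | x in [set x | adjT v x && (x != v)]]|).
  rewrite cardsU1 card_imset; last exact: inl_inj.
  suff -> : (inr None : 'I_10 + option 'I_k.-1) \notin [set inl x | x in [set x | adjT v x && (x != v)]] by [].
  by apply/negP => /imsetP [x _].
apply: subset_leq_card; apply/subsetP => y; rewrite !inE.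
case/orP => [/eqP -> | /imsetP [x xA ->]] /=; first by [].
by move: xA; rewrite !inE /adjT => /andP [/orP [/eqP -> | ->]]; rewrite ?eqxx.
Qed.

Theorem mainTheorem11 (v : 'I_10) (DeltaS : nat) :
  3 <= DeltaS ->
  3 <= maxdeg (attach_star T3 v DeltaS) ->
  gammaID (attach_star T3 v DeltaS) * maxdeg (attach_star T3 v DeltaS)
    <= (maxdeg (attach_star T3 v DeltaS) - 1) * gorder (attach_star T3 v DeltaS).
Proof.
move=> hk hD.
have [vA dom sep hc h3] := Aset_props v.
have h0 : 0 < DeltaS.-1 by case: (DeltaS) hk => [|[|[|]]].
have h1 : 1 < DeltaS.-1 by case: (DeltaS) hk => [|[|[|]]].
have hid := @key v (Aset v) DeltaS h0 h1 vA dom sep.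
have g := @gamma_le _ _ _ hid.
have cC := @card_C _ (Aset v) (Ordinal h0).
have nV : gorder (attach_star T3 v DeltaS) = 10 + DeltaS.
  by rewrite /gorder cardV // (leq_trans _ hk).
have Dk := @deg_center v DeltaS (leq_trans (isT : 0 < 3) hk).
rewrite nV; rewrite cardV ?(leq_trans _ hk) // in cC.
move: g cC Dk hD hc.
set gm := gammaID _; set D := maxdeg _; set a := #|~: Aset v|.
set c := #|Cset _ _|.
have fin : forall gm c a D k, gm <= c -> c + (a + 1) <= 10 + k -> k <= D -> 3 <= D ->
    10 + k <= (a + 1) * D -> gm * D <= (D - 1) * (10 + k).
  move=> gm' c' a' [|D'] k' h1' h2' h3' h4' h5' //.
  rewrite subn1 /=.
  have : gm' + (a' + 1) <= 10 + k' by lia.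
  nia.
case: eqP => [v3|_] g cC Dk hD ha; apply: (fin gm c a D DeltaS) => //.
  have D4 : 4 <= D by apply: deg_v3; apply: h3.
  nia.
nia.
Qed.
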